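(* Every fractal gasket $K$ satisfies the sharp separation condition: there is a constant $C'>0$ such that for every $k\ge1$ and all $I,J\in\Sigma^k$ with $\varphi_I(K)\cap\varphi_J(K)=\emptyset$, $$\operatorname{dist}(\varphi_I(K),\varphi_J(K))\ge C'\min\{\operatorname{diam}\varphi_I(K),\operatorname{diam}\varphi_J(K)\}.$$
   Context: Let $\Delta\subset\mathbb R^2$ be the triangle with vertices $(0,0)$, $(1,0)$, $(1/2,\sqrt3/2)$. A fractal gasket is the attractor $K$ (the nonempty compact set with $K=\bigcup_j\varphi_j(K)$) of $\{\varphi_j(z)=r_j(z+d_j)\}_{j=1}^N$, $r_j\in(0,1)$, $d_j\in\mathbb R^2$, such that $\bigcup_j\varphi_j(\Delta)\subset\Delta$ and, for $i\ne j$, $\varphi_i(\Delta)$ and $\varphi_j(\Delta)$ intersect only at common vertices. $\Sigma=\{1,\dots,N\}$; for $I=i_1\cdots i_k\in\Sigma^k$, $\varphi_I=\varphi_{i_1}\circ\cdots\circ\varphi_{i_k}$. $\operatorname{dist}(A,B)=\min\{\|a-b\|:a\in A,b\in B\}$. *)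

(* Defs.v *)
From mathcomp Require Import all_boot all_order all_algebra.
From mathcomp Require Import all_classical all_reals all_analysis.
Set Implicit Arguments. Unset Strict Implicit. Unset Printing Implicit Defensive.
Import Order.TTheory GRing.Theory Num.Theory numFieldNormedType.Exports.
Local Open Scope ring_scope.
Local Open Scope classical_set_scope.

Definition edist {R : realType} (p q : R * R) : R :=
  Num.sqrt ((p.1 - q.1) ^+ 2 + (p.2 - q.2) ^+ 2).

Definition triangle {R : realType} : set (R * R) :=
  [set p | exists a b c : R, [/\ 0 <= a, 0 <= b, 0 <= c, a + b + c = 1 &
      p = (b * 1 + c / 2, c * (Num.sqrt 3 / 2))]].

Definition tri_vertex {R : realType} : set (R * R) :=
  [set p | p = (0, 0) \/ p = (1, 0) \/ p = (2^-1, Num.sqrt 3 / 2)].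

Definition sim {R : realType} (r : R) (d : R * R) (z : R * R) : R * R :=
  (r * (z.1 + d.1), r * (z.2 + d.2)).

(* phi_I = phi_{i1} o ... o phi_{ik} for a word I = [:: i1; ...; ik] *)
Definition phiw {R : realType} (r : nat -> R) (d : nat -> R * R)
  (I : seq nat) : R * R -> R * R :=
  foldr (fun i f => sim (r i) (d i) \o f) id I.

Definition is_fractal_gasket {R : realType} (N : nat) (r : nat -> R)
  (d : nat -> R * R) (K : set (R * R)) : Prop :=
  [/\ (forall j, (j < N)%N -> 0 < r j < 1),
      (forall j, (j < N)%N -> sim (r j) (d j) @` triangle `<=` triangle),
      (forall i j, (i < N)%N -> (j < N)%N -> i <> j ->
         forall x, (sim (r i) (d i) @` triangle) x ->
                   (sim (r j) (d j) @` triangle) x ->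
           (exists2 v, tri_vertex v & x = sim (r i) (d i) v) /\
           (exists2 w, tri_vertex w & x = sim (r j) (d j) w)),
      K !=set0 /\ compact K &
      K = \bigcup_(j in [set j | (j < N)%N]) (sim (r j) (d j) @` K)].

Definition setdist {R : realType} (A B : set (R * R)) : R :=
  inf [set e | exists a b, [/\ A a, B b & e = edist a b]].

Definition diam {R : realType} (A : set (R * R)) : R :=
  sup [set e | exists a b, [/\ A a, A b & e = edist a b]].

(* Main.v *)
Require Import Defs.
From mathcomp Require Import all_boot all_order all_algebra.
From mathcomp Require Import all_classical all_reals all_analysis.
From mathcomp Require Import ring lra.
Import Order.TTheory GRing.Theory Num.Theory numFieldNormedType.Exports.
Set Implicit Arguments. Unset Strict Implicit. Unset Printing Implicit Defensive.
Local Open Scope ring_scope.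
Local Open Scope classical_set_scope.

Definition bet {R : realType} (z : R * R) : R := z.1 - z.2 / Num.sqrt 3.
Definition gam {R : realType} (z : R * R) : R := 2 * z.2 / Num.sqrt 3.
Definition nd {R : realType} (z w : R * R) : R :=
  `|bet z - bet w| + `|gam z - gam w|.
Definition pt {R : realType} (b c : R) : R * R := (b + c / 2, c * (Num.sqrt 3 / 2)).

Lemma s3_gt0 (R : realType) : 0 < Num.sqrt (3 : R).
Proof. by rewrite sqrtr_gt0. Qed.

Lemma s3_sq (R : realType) : Num.sqrt (3 : R) * Num.sqrt 3 = 3.
Proof. by rewrite -expr2 sqr_sqrtr. Qed.

Lemma min_spec (R : realType) (x y : R) :
  [/\ Num.min x y <= x, Num.min x y <= y & (Num.min x y = x \/ Num.min x y = y)].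
Proof. rewrite minElt; case: ltP => h; split; try lra; by [left|right]. Qed.

Lemma max_spec (R : realType) (x y : R) :
  [/\ x <= Num.max x y, y <= Num.max x y & (Num.max x y = x \/ Num.max x y = y)].
Proof. rewrite maxElt; case: ltP => h; split; try lra; by [left|right]. Qed.

Lemma bet_pt (R : realType) (b c : R) : bet (pt b c) = b.
Proof. rewrite /bet /pt /=. have := s3_gt0 R. move=> h. field. lra. Qed.

Lemma gam_pt (R : realType) (b c : R) : gam (pt b c) = c.
Proof. rewrite /gam /pt /=. have := s3_gt0 R. move=> h. field. lra. Qed.

Lemma pt_bg (R : realType) (z : R * R) : z = pt (bet z) (gam z).
Proof.
case: z => x y; rewrite /pt /bet /gam /=. have h := s3_gt0 R.
congr pair; field; lra.
Qed.

Lemma pt_eq (R : realType) (z w : R * R) : bet z = bet w -> gam z = gam w -> z = w.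
Proof. by move=> h1 h2; rewrite (pt_bg z) (pt_bg w) h1 h2. Qed.

Lemma bet_sim (R : realType) (r : R) d z : bet (sim r d z) = r * (bet z + bet d).
Proof. rewrite /bet /sim /=. have h := s3_gt0 R. field. lra. Qed.

Lemma gam_sim (R : realType) (r : R) d z : gam (sim r d z) = r * (gam z + gam d).
Proof. rewrite /gam /sim /=. have h := s3_gt0 R. field. lra. Qed.

Lemma tri_iff (R : realType) (z : R * R) :
  triangle z <-> [/\ 0 <= bet z, 0 <= gam z & bet z + gam z <= 1].
Proof.
split.
  case=> a [b [c [ha hb hc habc ->]]].
  have -> : (b * 1 + c / 2, c * (Num.sqrt 3 / 2)) = pt b c by rewrite mulr1.
  rewrite bet_pt gam_pt; split; lra.
case=> h1 h2 h3; exists (1 - bet z - gam z); exists (bet z); exists (gam z).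
have e : z = (bet z * 1 + gam z / 2, gam z * (Num.sqrt 3 / 2)) by rewrite mulr1 {1}(pt_bg z).
split => //; lra.
Qed.

Lemma vert_bg (R : realType) (v : R * R) : tri_vertex v ->
  (bet v = 0 /\ gam v = 0) \/ (bet v = 1 /\ gam v = 0) \/ (bet v = 0 /\ gam v = 1).
Proof.
have h := s3_gt0 R.
case=> [->|[->|->]]; rewrite /bet /gam /=.
- left; split; field; lra.
- right; left; split; field; lra.
- right; right; split; field; lra.
Qed.

Lemma nd_sim (R : realType) (r : R) d z w : 0 <= r ->
  nd (sim r d z) (sim r d w) = r * nd z w.
Proof.
move=> hr; rewrite /nd !bet_sim !gam_sim.
have -> : r * (bet z + bet d) - r * (bet w + bet d) = r * (bet z - bet w) by ring.
have -> : r * (gam z + gam d) - r * (gam w + gam d) = r * (gam z - gam w) by ring.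
by rewrite !normrM ger0_norm // mulrDr.
Qed.

Lemma nd_sym (R : realType) (z w : R * R) : nd z w = nd w z.
Proof. by rewrite /nd distrC [`|gam z - _|]distrC. Qed.

Lemma edist_bg (R : realType) (z w : R * R) :
  Defs.edist z w = Num.sqrt ((bet z - bet w) ^+ 2 + (bet z - bet w) * (gam z - gam w)
     + (gam z - gam w) ^+ 2).
Proof.
rewrite /Defs.edist; congr Num.sqrt.
have E (q : R * R) : q.1 = bet q + gam q / 2 /\ q.2 = gam q * (Num.sqrt 3 / 2).
  by split; rewrite /bet /gam; have hh := s3_gt0 R; field; lra.
have [e1 e2] := E z; have [e3 e4] := E w.
rewrite e1 e2 e3 e4.
have h := s3_sq R.
set u := bet z; set v := bet w; set x := gam z; set y := gam w.
set s := Num.sqrt 3.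
transitivity ((u - v + (x - y) / 2) ^+ 2 + (x - y) ^+ 2 * (s * s) / 4); first by field.
by rewrite h; field.
Qed.

Lemma edist_ge (R : realType) (z w : R * R) : nd z w / 2 <= Defs.edist z w.
Proof.
rewrite edist_bg /nd.
set u := bet z - bet w; set v := gam z - gam w.
have hn : 0 <= (`|u| + `|v|) / 2 by apply: divr_ge0 => //; apply: addr_ge0.
rewrite -(ger0_norm hn) -sqrtr_sqr; apply: ler_wsqrtr.
have hu : `|u| ^+ 2 = u ^+ 2 by rewrite real_normK ?num_real.
have hv : `|v| ^+ 2 = v ^+ 2 by rewrite real_normK ?num_real.
have huv : `|u| * `|v| = `|u * v| by rewrite normrM.
have h1 : - (u * v) <= `|u * v| by rewrite -normrN ler_norm.
have h2 : (u * v) <= `|u * v| by rewrite ler_norm.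
have h4 := sqr_ge0 (`|u| - `|v|).
rewrite -hu -hv. rewrite -huv in h1. rewrite !expr2 in h4 *. lra.
Qed.

Lemma s3_lt2 (R : realType) : Num.sqrt (3 : R) < 2.
Proof. have h := s3_sq R; have h0 := s3_gt0 R. nra. Qed.

Lemma edist_le (R : realType) (z w : R * R) : triangle z -> triangle w ->
  Defs.edist z w <= 2.
Proof.
move=> /tri_iff [h1 h2 h3] /tri_iff [h4 h5 h6].
rewrite edist_bg.
have -> : (2 : R) = Num.sqrt (2 ^+ 2) by rewrite sqrtr_sqr ger0_norm.
apply: ler_wsqrtr.
set u := bet z - bet w; set v := gam z - gam w.
have hu1 : u <= 1 by rewrite /u; lra.
have hu2 : -1 <= u by rewrite /u; lra.
have hv1 : v <= 1 by rewrite /v; lra.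
have hv2 : -1 <= v by rewrite /v; lra.
nra.
Qed.

Lemma edist_sim (R : realType) (r : R) d z w : 0 <= r ->
  Defs.edist (sim r d z) (sim r d w) = r * Defs.edist z w.
Proof.
move=> hr; rewrite /Defs.edist /sim /=.
have -> : (r * (z.1 + d.1) - r * (w.1 + d.1)) ^+ 2 + (r * (z.2 + d.2) - r * (w.2 + d.2)) ^+ 2
  = r ^+ 2 * ((z.1 - w.1) ^+ 2 + (z.2 - w.2) ^+ 2) by ring.
rewrite sqrtrM ?sqr_ge0 // sqrtr_sqr ger0_norm //.
Qed.

Lemma coord1_le (R : realType) (z w : R * R) : `|z.1 - w.1| <= nd z w.
Proof.
have -> : z.1 - w.1 = (bet z - bet w) + (gam z - gam w) / 2.
  rewrite /bet /gam; have h := s3_gt0 R; field; lra.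
rewrite /nd; apply: (le_trans (ler_normD _ _)).
rewrite lerD2l normrM (ger0_norm (_ : 0 <= 2^-1)) //.
have := normr_ge0 (gam z - gam w); lra.
Qed.

Lemma coord2_le (R : realType) (z w : R * R) : `|z.2 - w.2| <= nd z w.
Proof.
have -> : z.2 - w.2 = (gam z - gam w) * (Num.sqrt 3 / 2).
  rewrite /bet /gam; have h := s3_gt0 R; field; lra.
rewrite /nd normrM (ger0_norm (_ : 0 <= Num.sqrt 3 / 2)); last first.
  have := s3_gt0 R; lra.
have h2 := s3_lt2 R; have h0 := normr_ge0 (gam z - gam w); have h1 := normr_ge0 (bet z - bet w).
nra.
Qed.

Lemma in_simtri (R : realType) (r : R) d w : 0 < r ->
  (sim r d @` triangle) w <->
  [/\ r * bet d <= bet w, r * gam d <= gam w & bet w + gam w <= r * (bet d + gam d) + r].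
Proof.
move=> hr; split.
  case=> z /tri_iff [h1 h2 h3] <-; rewrite bet_sim gam_sim; split; nra.
case=> h1 h2 h3.
exists (pt (bet w / r - bet d) (gam w / r - gam d)).
  apply/tri_iff; rewrite bet_pt gam_pt.
  have -> : bet w / r - bet d = (bet w - r * bet d) / r by field; lra.
  have -> : gam w / r - gam d = (gam w - r * gam d) / r by field; lra.
  split; try (apply: divr_ge0; lra).
  rewrite -mulrDl ler_pdivrMr //; lra.
apply: pt_eq; rewrite ?bet_sim ?gam_sim ?bet_pt ?gam_pt; field; lra.
Qed.

Definition rp {R : realType} (r : nat -> R) (I : seq nat) : R :=
  foldr (fun i a => r i * a) 1 I.

Lemma phiw_cons (R : realType) (r : nat -> R) d i I z :
  phiw r d (i :: I) z = sim (r i) (d i) (phiw r d I z).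
Proof. by []. Qed.

Lemma phiw_nil (R : realType) (r : nat -> R) d z : phiw r d [::] z = z.
Proof. by []. Qed.

Lemma rp_bnd (R : realType) N (r : nat -> R) I :
  (forall j, (j < N)%N -> 0 < r j < 1) -> all (fun i => (i < N)%N) I ->
  0 < rp r I <= 1.
Proof.
move=> hr; elim: I => [|i I IH] /=; first by rewrite ltr01 lexx.
move=> /andP [hi hI]; have := IH hI; have := hr i hi => /andP [a b] /andP [c e].
apply/andP; split; nra.
Qed.

Lemma nd_phiw (R : realType) N (r : nat -> R) d I z w :
  (forall j, (j < N)%N -> 0 < r j < 1) -> all (fun i => (i < N)%N) I ->
  nd (phiw r d I z) (phiw r d I w) = rp r I * nd z w.
Proof.
move=> hr; elim: I => [|i I IH] /=; first by rewrite mul1r.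
move=> /andP [hi hI]; rewrite nd_sim ?IH // ?mulrA //.
by have /andP [a _] := hr i hi; apply: ltW.
Qed.

Lemma edist_phiw (R : realType) N (r : nat -> R) d I z w :
  (forall j, (j < N)%N -> 0 < r j < 1) -> all (fun i => (i < N)%N) I ->
  Defs.edist (phiw r d I z) (phiw r d I w) = rp r I * Defs.edist z w.
Proof.
move=> hr; elim: I => [|i I IH] /=; first by rewrite mul1r.
move=> /andP [hi hI]; rewrite edist_sim ?IH // ?mulrA //.
by have /andP [a _] := hr i hi; apply: ltW.
Qed.

Lemma phiw_tri (R : realType) N (r : nat -> R) d I z :
  (forall j, (j < N)%N -> sim (r j) (d j) @` triangle `<=` triangle) ->
  all (fun i => (i < N)%N) I -> triangle z -> triangle (phiw r d I z).
Proof.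
move=> hs; elim: I => [|i I IH] //= /andP [hi hI] hz.
apply: (hs i hi); exists (phiw r d I z) => //; exact: IH.
Qed.

Lemma fin_lb (R : realType) (f : nat -> R) n :
  exists2 e : R, 0 < e & forall i, (i < n)%N -> 0 < f i -> e <= f i.
Proof.
elim: n => [|n [e he H]]; first by exists 1 => //.
case: (ltP 0 (f n)) => hf.
  exists (Num.min e (f n)); first by rewrite lt_min he hf.
  move=> i; rewrite ltnS leq_eqVlt => /orP [/eqP ->|hi] hfi.
    by rewrite ge_min lexx orbT.
  by rewrite ge_min H.
exists e => // i; rewrite ltnS leq_eqVlt => /orP [/eqP ->|hi] hfi.
  by exfalso; move: hf; rewrite leNgt hfi.
exact: H.
Qed.

Lemma fin_lb2 (R : realType) (g : nat -> nat -> R) n :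
  exists2 e : R, 0 < e & forall i j, (i < n)%N -> (j < n)%N -> 0 < g i j -> e <= g i j.
Proof.
elim: n => [|n [e he H]]; first by exists 1 => //.
have [e1 he1 H1] := fin_lb (fun j => g n j) n.+1.
have [e2 he2 H2] := fin_lb (fun i => g i n) n.+1.
exists (Num.min e (Num.min e1 e2)); first by rewrite !lt_min he he1 he2.
move=> i j hi hj hg.
move: hi; rewrite ltnS leq_eqVlt => /orP [/eqP Ei|hi].
  subst i; by rewrite !ge_min H1 ?orbT.
move: hj; rewrite ltnS leq_eqVlt => /orP [/eqP Ej|hj].
  subst j; rewrite !ge_min H2 ?orbT //; exact: ltnW.
by rewrite ge_min H.
Qed.

Lemma inf_nonneg (R : realType) (S : set R) (rho : R) : S !=set0 -> has_lbound S -> rho < 1 ->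
  (forall x, S x -> exists y, S y /\ exists t, [/\ 0 < t, t <= rho & t * y <= x]) ->
  forall x, S x -> 0 <= x.
Proof.
move=> ne hl hrho step x Sx.
have hm := ge_inf hl.
case: (lerP 0 (inf S)) => h0; first by apply: (le_trans h0); exact: hm.
have : rho * inf S <= inf S.
  apply: lb_le_inf => // y Sy.
  have [y' [Sy' [t [ht1 ht2 ht3]]]] := step y Sy.
  have := hm y' Sy'. nra.
nra.
Qed.

Lemma sim_params (R : realType) (r : R) d : 0 < r ->
  sim r d @` triangle `<=` triangle ->
  [/\ 0 <= r * bet d, 0 <= r * gam d & r * (bet d + gam d) + r <= 1].
Proof.
move=> hr hs.
have t0 : triangle (pt (0:R) 0) by apply/tri_iff; rewrite bet_pt gam_pt; split; lra.
have t1 : triangle (pt (1:R) 0) by apply/tri_iff; rewrite bet_pt gam_pt; split; lra.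
have /tri_iff [a1 a2 a3] : triangle (sim r d (pt 0 0)) by apply: hs; exists (pt 0 0).
have /tri_iff [b1 b2 b3] : triangle (sim r d (pt 1 0)) by apply: hs; exists (pt 1 0).
move: a1 a2 b3; rewrite !bet_sim !gam_sim !bet_pt !gam_pt => a1 a2 b3.
split; lra.
Qed.

Lemma bnd (R : realType) (K: set (R*R)) : compact K ->
  exists M : R, forall z, K z -> `|z.1| <= M /\ `|z.2| <= M.
Proof.
move=> /compact_bounded [M [_ HM]]. exists (M+1) => z Kz.
have hM1 : M < M + 1 by rewrite ltrDl ltr01.
have := HM (M+1) hM1 z Kz. rewrite /= prod_normE ge_max => /andP [] //.
Qed.

Lemma bg_bnd (R : realType) (z : R * R) M : `|z.1| <= M -> `|z.2| <= M ->
  `|bet z| <= 2 * M /\ `|gam z| <= 2 * M.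
Proof.
move=> h1 h2.
have hs := s3_sq R; have hs0 := s3_gt0 R.
have hs1 : 1 <= Num.sqrt (3:R) by nra.
have e : `|z.2 / Num.sqrt 3| <= `|z.2|.
  rewrite normrM normfV (ger0_norm (ltW hs0)) ler_pdivrMr //.
  have := normr_ge0 z.2; nra.
split.
  rewrite /bet; apply: (le_trans (ler_normB _ _)); lra.
rewrite /gam -mulrA normrM ger0_norm //; lra.
Qed.

Lemma K_tri (R : realType) N (r : nat -> R) d K :
  is_fractal_gasket N r d K -> K `<=` triangle.
Proof.
case=> hr hs _ [[z0 Kz0] cK] hK.
have [e he H] := fin_lb (fun i => 1 - r i) N.
have hrho : forall j, (j < N)%N -> r j <= 1 - e.
  move=> j hj; have /andP [a b] := hr j hj; have := H j hj; lra.
have [M HM] := bnd cK.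
have decomp : forall z, K z -> exists j, (j < N)%N /\ exists2 y, K y & sim (r j) (d j) y = z.
  move=> z Kz; move: Kz; rewrite {1}hK => -[j hj [y Ky <-]].
  by exists j; split => //; exists y.
have gen : forall f : R * R -> R, (forall z, K z -> -(4 * M) - 1 <= f z) ->
    (forall j y, (j < N)%N -> r j * f y <= f (sim (r j) (d j) y)) ->
    forall z, K z -> 0 <= f z.
  move=> f lb st z Kz.
  apply: (@inf_nonneg R (f @` K) (1 - e)); last by exists z.
  - by exists (f z0); exists z0.
  - by exists (-(4 * M) - 1) => x [y Ky <-]; exact: lb.
  - lra.
  move=> x [y Ky <-]; have [j [hj [y' Ky' Ey]]] := decomp y Ky.
  exists (f y'); split; first by exists y'.
  exists (r j); split; [by case/andP: (hr j hj) | exact: hrho | rewrite -Ey; exact: st].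
have lbs : forall z, K z -> [/\ -(4 * M) - 1 <= bet z, -(4 * M) - 1 <= gam z &
    -(4 * M) - 1 <= 1 - bet z - gam z].
  move=> z Kz; have [h1 h2] := HM z Kz.
  have [h3 h4] := bg_bnd h1 h2.
  move: h3 h4; rewrite !ler_norml => /andP [a b] /andP [c f].
  have := normr_ge0 z.1; split; lra.
have par : forall j, (j < N)%N -> [/\ 0 <= r j * bet (d j), 0 <= r j * gam (d j) &
    r j * (bet (d j) + gam (d j)) + r j <= 1].
  move=> j hj; apply: sim_params; [by case/andP: (hr j hj) | exact: hs].
move=> z Kz; apply/tri_iff; split.
- apply: (gen (fun w => bet w)) Kz; first by move=> w /lbs [].
  move=> j y hj; have [a b c] := par j hj; rewrite /= bet_sim.
  have -> : r j * (bet y + bet (d j)) = r j * bet y + r j * bet (d j) by ring.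
  lra.
- apply: (gen (fun w => gam w)) Kz; first by move=> w /lbs [].
  move=> j y hj; have [a b c] := par j hj; rewrite /= gam_sim.
  have -> : r j * (gam y + gam (d j)) = r j * gam y + r j * gam (d j) by ring.
  lra.
- suff : 0 <= 1 - bet z - gam z by lra.
  apply: (gen (fun w => 1 - bet w - gam w)) Kz; first by move=> w /lbs [].
  move=> j y hj; have [a b c] := par j hj; rewrite /= bet_sim gam_sim.
  have -> : 1 - r j * (bet y + bet (d j)) - r j * (gam y + gam (d j)) =
    r j * (1 - bet y - gam y) + (1 - (r j * (bet (d j) + gam (d j)) + r j)) by ring.
  lra.
Qed.

Definition vert {R : realType} (k : nat) : R * R :=
  if k == 0%N then pt 0 0 else if k == 1%N then pt 1 0 else pt 0 1.

Lemma vert_cases (R : realType) (p : R * R) : tri_vertex p ->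
  exists2 k, (k < 3)%N & p = vert k.
Proof.
move=> /vert_bg [[h1 h2]|[[h1 h2]|[h1 h2]]]; rewrite (pt_bg p) h1 h2.
- by exists 0%N.
- by exists 1%N.
- by exists 2%N.
Qed.

Lemma nlb (R : realType) (x : R) : x <= `|x| /\ - x <= `|x|.
Proof. by split; [rewrite ler_norm | rewrite -normrN ler_norm]. Qed.

Lemma nd_ge0 (R : realType) (z w : R * R) : 0 <= nd z w.
Proof. by rewrite /nd addr_ge0. Qed.

Lemma nd_eq0 (R : realType) (z w : R * R) : nd z w = 0 -> z = w.
Proof.
rewrite /nd => h.
have h1 := normr_ge0 (bet z - bet w); have h2 := normr_ge0 (gam z - gam w).
have e1 : `|bet z - bet w| = 0 by lra.
have e2 : `|gam z - gam w| = 0 by lra.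
apply: pt_eq; apply/eqP; rewrite -subr_eq0 -normr_eq0; apply/eqP => //.
Qed.

Lemma far_vertex (R : realType) (r : R) d k z : 0 < r -> (k < 3)%N ->
  sim r d @` triangle `<=` triangle -> (sim r d @` triangle) z ->
  nd (sim r d (vert k)) (vert k) <= nd z (vert k).
Proof.
move=> hr hk hs /(in_simtri _ _ hr) [z1 z2 z3].
have [a b c] := sim_params hr hs.
rewrite /nd !bet_sim !gam_sim.
have [n1 n2] := nlb (bet z - bet (vert k)).
have [n3 n4] := nlb (gam z - gam (vert k)).
move: n1 n2 n3 n4.
case: k hk => [|[|[|k]]] // _; rewrite /vert /= ?bet_pt ?gam_pt;
  move: a b c z1 z2 z3; move: (bet d) (gam d) (bet z) (gam z) => B G zb zc a b c z1 z2 z3 n1 n2 n3 n4;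
  rewrite ?subr0 in n1 n2 n3 n4; rewrite mulrDr in c z3.
- rewrite !add0r !subr0 !ger0_norm //; lra.
- rewrite !add0r !subr0 mulrDr mulr1 (ger0_norm b) ler0_norm; lra.
- rewrite !add0r !subr0 mulrDr mulr1 (ger0_norm a) (ler0_norm (x := _ - 1)); lra.
Qed.

Lemma away_nd (R : realType) (K: set (R*R)) p : closed K -> ~ K p ->
  exists2 e : R, 0 < e & forall z, K z -> e <= nd z p.
Proof.
move=> cK Kp. have := closed_openC cK. rewrite openE => /(_ p Kp).
rewrite /interior. move=> /nbhs_ballP [e e0 he]. exists e => // z Kz.
case: (lerP e `|z.1 - p.1|) => h1; first exact: (le_trans h1 (coord1_le z p)).
case: (lerP e `|z.2 - p.2|) => h2; first exact: (le_trans h2 (coord2_le z p)).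
exfalso; apply: (he z) => //.
rewrite /ball /= /prod_ball /=.
split; rewrite /ball /= distrC //.
Qed.

Lemma rp_cons (R : realType) (r : nat -> R) i I : rp r (i :: I) = r i * rp r I.
Proof. by []. Qed.

Lemma vertex_sep (R : realType) N (r : nat -> R) d K :
  is_fractal_gasket N r d K ->
  exists2 c : R, 0 < c & forall I p, all (fun i => (i < N)%N) I -> tri_vertex p ->
    ~ (phiw r d I @` K) p -> forall z, (phiw r d I @` K) z -> c * rp r I <= nd z p.
Proof.
move=> G; have KT := K_tri G.
case: G => hr hs _ [[z0 Kz0] cK] hK.
have clK : closed K by apply: compact_closed => //; exact: norm_hausdorff.
have [del hdel Hdel] := fin_lb2 (fun n k => nd (sim (r n) (d n) (vert k)) (vert k)) (N + 3).
have Ev : forall k, exists2 e : R, 0 < e & (~ K (vert k) -> forall z, K z -> e <= nd z (vert k)).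
  move=> k; case: (pselect (K (vert k))) => h.
    by exists 1 => //.
  have [e he H] := away_nd clK h; by exists e.
have [e0 he0 H0] := Ev 0%N; have [e1 he1 H1] := Ev 1%N; have [e2 he2 H2] := Ev 2%N.
set c := Num.min del (Num.min e0 (Num.min e1 e2)).
have hc : 0 < c by rewrite !lt_min hdel he0 he1 he2.
have [c1 c2 c3 c4] : [/\ c <= del, c <= e0, c <= e1 & c <= e2] by rewrite !ge_min !lexx ?orbT.
exists c => // I p; elim: I => [|n I IH] /=.
  move=> _ /vert_cases [k hk ->] Kp z [y Ky <-]; rewrite mulr1 /=.
  have Kp' : ~ K (vert k) by move=> h; apply: Kp; exists (vert k).
  clear Kp; case: k hk Kp' => [|[|[|k]]] // _ Kp'.
  - exact: (le_trans c2 (H0 Kp' y Ky)).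
  - exact: (le_trans c3 (H1 Kp' y Ky)).
  - exact: (le_trans c4 (H2 Kp' y Ky)).
move=> /andP [hn hI] vp Np z [y Ky <-].
have /andP [hrn hrn1] := hr n hn.
have /andP [rp0 rp1] : 0 < rp r I <= 1 by apply: rp_bnd hI.
case: (pselect (sim (r n) (d n) p = p)) => fp.
  have Np' : ~ (phiw r d I @` K) p.
    by move=> [y' Ky' e']; apply: Np; exists y' => //=; rewrite e' fp.
  have := IH hI vp Np' (phiw r d I y) (ex_intro2 _ _ y Ky erefl).
  rewrite -{2}fp nd_sim; last exact: ltW.
  move=> h; rewrite mulrCA; apply: ler_wpM2l => //; exact: ltW.
have [k hk ek] := vert_cases vp; subst p.
have zin : (sim (r n) (d n) @` triangle) (sim (r n) (d n) (phiw r d I y)).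
  by exists (phiw r d I y) => //; apply: (phiw_tri hs hI); exact: KT.
have := far_vertex hrn hk (hs n hn) zin.
have pos : 0 < nd (sim (r n) (d n) (vert k)) (vert k).
  rewrite lt_neqAle nd_ge0 andbT; apply/eqP => /esym/nd_eq0; exact: fp.
have := Hdel n k (ltn_addr 3 hn) (leq_trans hk (leq_addl N 3)) pos.
move=> h1 h2.
have : c * (r n * rp r I) <= c by apply: ler_piMr; [exact: ltW | nra].
move=> h3; apply: (le_trans h3); apply: (le_trans c1); exact: (le_trans h1 h2).
Qed.

Lemma geo (R : realType) (Bi Gi Si Bj Gj Sj Mb Mc mS ab ac bb bc : R) :
  Bi <= Mb -> Bj <= Mb -> (Mb = Bi \/ Mb = Bj) ->
  Gi <= Mc -> Gj <= Mc -> (Mc = Gi \/ Mc = Gj) ->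
  mS <= Si -> mS <= Sj -> (mS = Si \/ mS = Sj) ->
  Bi <= ab -> Gi <= ac -> ab + ac <= Si ->
  Bj <= bb -> Gj <= bc -> bb + bc <= Sj ->
  (mS - Mb - Mc < 0 -> -(mS - Mb - Mc) <= `|ab - bb| + `|ac - bc|) /\
  (mS - Mb - Mc = 0 -> `|ab - Mb| + `|ac - Mc| <= 4 * (`|ab - bb| + `|ac - bc|)).
Proof.
move=> h1 h2 h3 h4 h5 h6 h7 h8 h9 a1 a2 a3 b1 b2 b3.
have [n1 n2] := nlb (ab - bb); have [n3 n4] := nlb (ac - bc).
split.
  move=> hE; case: h3 => e1; case: h6 => e2; case: h9 => e3; lra.
move=> hE.
have X : `|ab - Mb| <= 2 * (`|ab - bb| + `|ac - bc|).
  rewrite ler_norml; apply/andP; split; case: h3 => e1; case: h6 => e2; case: h9 => e3; lra.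
have Y : `|ac - Mc| <= 2 * (`|ab - bb| + `|ac - bc|).
  rewrite ler_norml; apply/andP; split; case: h3 => e1; case: h6 => e2; case: h9 => e3; lra.
lra.
Qed.

Definition Bp {R : realType} (r : nat -> R) (d : nat -> R * R) i := r i * bet (d i).
Definition Gp {R : realType} (r : nat -> R) (d : nat -> R * R) i := r i * gam (d i).
Definition Sp {R : realType} (r : nat -> R) (d : nat -> R * R) i :=
  r i * (bet (d i) + gam (d i)) + r i.
Definition Ee {R : realType} (r : nat -> R) (d : nat -> R * R) i j :=
  Num.min (Sp r d i) (Sp r d j) - Num.max (Bp r d i) (Bp r d j) - Num.max (Gp r d i) (Gp r d j).

Lemma in_simtri' (R : realType) (r : nat -> R) d i w : 0 < r i ->
  (sim (r i) (d i) @` triangle) w <->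
  [/\ Bp r d i <= bet w, Gp r d i <= gam w & bet w + gam w <= Sp r d i].
Proof. exact: in_simtri. Qed.

Lemma sim_vert (R : realType) (r : nat -> R) d i k : (k < 3)%N ->
  let w := sim (r i) (d i) (vert k) in
  (bet w = Bp r d i /\ gam w = Gp r d i) \/
  (bet w = Bp r d i + r i /\ gam w = Gp r d i) \/
  (bet w = Bp r d i /\ gam w = Gp r d i + r i).
Proof.
move=> hk /=; rewrite bet_sim gam_sim /Bp /Gp.
case: k hk => [|[|[|k]]] // _; rewrite /vert /= bet_pt gam_pt.
- by left; rewrite !add0r.
- by right; left; rewrite add0r (mulrDr (r i) 1) mulr1 addrC.
- by right; right; rewrite add0r (mulrDr (r i) 1) mulr1 addrC.
Qed.

Lemma E_nonpos (R : realType) N (r : nat -> R) d K i j :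
  is_fractal_gasket N r d K -> (i < N)%N -> (j < N)%N -> i <> j -> Ee r d i j <= 0.
Proof.
case=> hr hs hv _ _ hi hj hij.
have /andP [ri _] := hr i hi; have /andP [rj _] := hr j hj.
rewrite leNgt; apply/negP => hE.
move: hE; rewrite /Ee.
have [a1 a2 a3] := max_spec (Bp r d i) (Bp r d j).
have [b1 b2 b3] := max_spec (Gp r d i) (Gp r d j).
have [c1 c2 c3] := min_spec (Sp r d i) (Sp r d j).
move: a1 a2 a3 b1 b2 b3 c1 c2 c3.
set Mb := Num.max _ _; set Mc := Num.max _ _; set mS := Num.min _ _.
move=> a1 a2 a3 b1 b2 b3 c1 c2 c3 hE.
set E := mS - Mb - Mc.
set P := pt (Mb + E / 3) (Mc + E / 3).
have Pi : (sim (r i) (d i) @` triangle) P.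
  apply/in_simtri' => //; rewrite /P bet_pt gam_pt /E; split; lra.
have Pj : (sim (r j) (d j) @` triangle) P.
  apply/in_simtri' => //; rewrite /P bet_pt gam_pt /E; split; lra.
have [[v /vert_cases [k hk ->] ev] _] := hv i j hi hj hij P Pi Pj.
have eb : bet P = bet (sim (r i) (d i) (vert k)) by rewrite ev.
have eg : gam P = gam (sim (r i) (d i) (vert k)) by rewrite ev.
move: eb eg; rewrite /P bet_pt gam_pt.
case: (sim_vert r d i hk) => [[-> ->]|[[-> ->]|[-> ->]]]; rewrite /E; lra.
Qed.

Lemma min_mul (R : realType) (r x y : R) : 0 <= r ->
  Num.min (r * x) (r * y) <= r * Num.min x y.
Proof.
move=> hr; case: (min_spec x y) => _ _ [->|->]; by rewrite ge_min lexx ?orbT.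
Qed.

Lemma main_sep (R : realType) N (r : nat -> R) d K :
  is_fractal_gasket N r d K ->
  exists2 c : R, 0 < c & forall I J, size I = size J ->
    all (fun i => (i < N)%N) I -> all (fun i => (i < N)%N) J ->
    phiw r d I @` K `&` phiw r d J @` K = set0 ->
    forall a b, (phiw r d I @` K) a -> (phiw r d J @` K) b ->
      c * Num.min (rp r I) (rp r J) <= nd a b.
Proof.
move=> G; have KT := K_tri G; have [cv hcv Hv] := vertex_sep G.
have G' := G; case: G' => hr hs hv [[z0 Kz0] cK] hK.
have [dl hdl Hdl] := fin_lb2 (fun i j => - Ee r d i j) N.
set c := Num.min dl (cv / 4).
have hc : 0 < c by rewrite lt_min hdl divr_gt0.
have [c1 c2] : c <= dl /\ c <= cv / 4 by rewrite !ge_min !lexx ?orbT.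
exists c => //.
elim => [|i I IH] [|j J] hsz //.
  move=> _ _ hdis; exfalso.
  have : (phiw r d [::] @` K `&` phiw r d [::] @` K) z0 by split; exists z0.
  by rewrite hdis.
case: hsz => hsz.
move=> /andP [hi hI] /andP [hj hJ] hdis a b [y Ky <-] [y' Ky' <-].
rewrite !rp_cons !phiw_cons.
have /andP [ri ri1] := hr i hi; have /andP [rj rj1] := hr j hj.
have /andP [rI0 rI1] : 0 < rp r I <= 1 by apply: rp_bnd hI.
have /andP [rJ0 rJ1] : 0 < rp r J <= 1 by apply: rp_bnd hJ.
have TI : triangle (phiw r d I y) by apply: (phiw_tri hs hI); exact: KT.
have TJ : triangle (phiw r d J y') by apply: (phiw_tri hs hJ); exact: KT.
case: (pselect (i = j)) => eij.
  subst j.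
  have hdis' : phiw r d I @` K `&` phiw r d J @` K = set0.
    apply/seteqP; split => // w [[u Ku eu] [u' Ku' eu']].
    have : (phiw r d (i :: I) @` K `&` phiw r d (i :: J) @` K) (sim (r i) (d i) w).
      by split; [exists u | exists u']; rewrite /= ?eu ?eu'.
    by rewrite hdis.
  have := IH J hsz hI hJ hdis' (phiw r d I y) (phiw r d J y')
    (ex_intro2 _ _ y Ky erefl) (ex_intro2 _ _ y' Ky' erefl).
  rewrite nd_sim; last exact: ltW.
  have hm := min_mul (rp r I) (rp r J) (ltW ri).
  move=> h; apply: (le_trans (ler_wpM2l (ltW hc) hm)).
  rewrite mulrCA; apply: ler_wpM2l => //; exact: ltW.
set a' := phiw r d I y; set b' := phiw r d J y'.
have /(@in_simtri' R r d i _ ri) [a1 a2 a3] : (sim (r i) (d i) @` triangle) (sim (r i) (d i) a').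
  by exists a'.
have /(@in_simtri' R r d j _ rj) [b1 b2 b3] : (sim (r j) (d j) @` triangle) (sim (r j) (d j) b').
  by exists b'.
have hE := E_nonpos G hi hj eij.
have [m1 m2 m3] := min_spec (rp r (i :: I)) (rp r (j :: J)).
have mge : 0 <= Num.min (rp r (i :: I)) (rp r (j :: J)).
  by rewrite le_min !rp_cons; apply/andP; split; apply: mulr_ge0; apply: ltW.
have mle : Num.min (rp r (i :: I)) (rp r (j :: J)) <= 1.
  by apply: (le_trans m1); rewrite rp_cons; apply: mulr_ile1 => //; apply: ltW.
move: m1 m2 m3 mge mle; rewrite !rp_cons => m1 m2 m3 mge mle.
move: hE; rewrite /Ee.
have [x1 x2 x3] := max_spec (Bp r d i) (Bp r d j).
have [y1 y2 y3] := max_spec (Gp r d i) (Gp r d j).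
have [z1 z2 z3] := min_spec (Sp r d i) (Sp r d j).
move: x1 x2 x3 y1 y2 y3 z1 z2 z3.
set Mb := Num.max _ _; set Mc := Num.max _ _; set mS := Num.min _ _.
move=> x1 x2 x3 y1 y2 y3 z1 z2 z3 hE.
have [g1 g2] := geo x1 x2 x3 y1 y2 y3 z1 z2 z3 a1 a2 a3 b1 b2 b3.
have x3' : Mb = Bp r d j \/ Mb = Bp r d i by case: x3; [right|left].
have y3' : Mc = Gp r d j \/ Mc = Gp r d i by case: y3; [right|left].
have z3' : mS = Sp r d j \/ mS = Sp r d i by case: z3; [right|left].
have [_ g2'] := geo x2 x1 x3' y2 y1 y3' z2 z1 z3' b1 b2 b3 a1 a2 a3.
move: hE; rewrite le_eqVlt => /orP [/eqP hE0|hEn].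
  (* touching case *)
  set v := pt Mb Mc.
  have vi : (sim (r i) (d i) @` triangle) v.
    apply/in_simtri' => //; rewrite /v bet_pt gam_pt; split => //; clear -hE0 z1; lra.
  have vj : (sim (r j) (d j) @` triangle) v.
    apply/in_simtri' => //; rewrite /v bet_pt gam_pt; split => //; clear -hE0 z2; lra.
  have [[p vp ep] [q vq eq]] := hv i j hi hj eij v vi vj.
  case: (pselect ((phiw r d (i :: I) @` K) v)) => vA.
    have vB : ~ (phiw r d (j :: J) @` K) v.
      by move=> vB; have : (phiw r d (i :: I) @` K `&` phiw r d (j :: J) @` K) v by [];
        rewrite hdis.
    have nq : ~ (phiw r d J @` K) q.
      by move=> [u Ku eu]; apply: vB; exists u => //; rewrite phiw_cons eu eq.
    have h1 := Hv J q hJ vq nq b' (ex_intro2 _ _ y' Ky' erefl).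
    have h2 : nd (sim (r j) (d j) b') v = r j * nd b' q by rewrite eq nd_sim // ltW.
    have h3 : nd (sim (r j) (d j) b') v <= 4 * nd (sim (r i) (d i) a') (sim (r j) (d j) b').
      rewrite /nd /v bet_pt gam_pt (distrC (bet (sim _ _ a'))) (distrC (gam (sim _ _ a'))).
      exact: g2' hE0.
    have h4 : cv * (r j * rp r J) <= r j * nd b' q by rewrite mulrCA; apply: ler_wpM2l => //; exact: ltW.
    have h5 : c * Num.min (r i * rp r I) (r j * rp r J) <= cv / 4 * (r j * rp r J).
      apply: (le_trans (ler_wpM2l (ltW hc) m2)); apply: ler_wpM2r => //.
      by apply: mulr_ge0; apply: ltW.
    clear -h2 h3 h4 h5; lra.
  have np : ~ (phiw r d I @` K) p.
    by move=> [u Ku eu]; apply: vA; exists u => //; rewrite phiw_cons eu ep.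
  have h1 := Hv I p hI vp np a' (ex_intro2 _ _ y Ky erefl).
  have h2 : nd (sim (r i) (d i) a') v = r i * nd a' p by rewrite ep nd_sim // ltW.
  have h3 : nd (sim (r i) (d i) a') v <= 4 * nd (sim (r i) (d i) a') (sim (r j) (d j) b').
    rewrite /nd /v bet_pt gam_pt; exact: g2 hE0.
  have h4 : cv * (r i * rp r I) <= r i * nd a' p by rewrite mulrCA; apply: ler_wpM2l => //; exact: ltW.
  have h5 : c * Num.min (r i * rp r I) (r j * rp r J) <= cv / 4 * (r i * rp r I).
    apply: (le_trans (ler_wpM2l (ltW hc) m1)); apply: ler_wpM2r => //.
    by apply: mulr_ge0; apply: ltW.
  clear -h2 h3 h4 h5; lra.
(* separated case *)
have h1 := g1 hEn.
have pos : 0 < - (mS - Mb - Mc) by clear -hEn; lra.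
have h2 : dl <= - (mS - Mb - Mc) by exact: (Hdl i j hi hj pos).
have h3 : c * Num.min (r i * rp r I) (r j * rp r J) <= c.
  by apply: ler_piMr => //; exact: ltW.
rewrite /nd; clear -h1 h2 h3 c1; lra.
Qed.

Theorem lemma4p2 (R : realType) (N : nat) (r : nat -> R) (d : nat -> R * R)
  (K : set (R * R)) :
  is_fractal_gasket N r d K ->
  exists C' : R, 0 < C' /\
    forall (k : nat) (I J : seq nat), (1 <= k)%N ->
      size I = k -> size J = k ->
      all (fun i => (i < N)%N) I -> all (fun j => (j < N)%N) J ->
      phiw r d I @` K `&` phiw r d J @` K = set0 ->
      C' * Num.min (diam (phiw r d I @` K)) (diam (phiw r d J @` K))
        <= setdist (phiw r d I @` K) (phiw r d J @` K).
Proof.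
move=> G; have [c hc H] := main_sep G; have KT := K_tri G.
case: G => hr hs _ [[z0 Kz0] cK] hK.
have hc4 : 0 < c / 4 by apply: divr_gt0.
exists (c / 4); split => // k I J hk hI hJ aI aJ hdis.
have hsz : size I = size J by rewrite hI hJ.
have /andP [rI0 rI1] := rp_bnd hr aI.
have /andP [rJ0 rJ1] := rp_bnd hr aJ.
have dbnd : forall L, all (fun i => (i < N)%N) L -> diam (phiw r d L @` K) <= 2 * rp r L.
  move=> L aL; apply: ge_sup.
    exists (Defs.edist (phiw r d L z0) (phiw r d L z0)).
    by exists (phiw r d L z0), (phiw r d L z0); split => //; exists z0.
  move=> e [a1 [a2 [[y1 Ky1 <-] [y2 Ky2 <-] ->]]].
  rewrite (edist_phiw _ _ _ hr aL) mulrC; apply: ler_wpM2r.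
    by have /andP [h _] := rp_bnd hr aL; exact: ltW.
  exact: edist_le (KT y1 Ky1) (KT y2 Ky2).
have dA := dbnd I aI; have dB := dbnd J aJ.
have low : c * Num.min (rp r I) (rp r J) / 2 <= setdist (phiw r d I @` K) (phiw r d J @` K).
  apply: lb_le_inf.
    exists (Defs.edist (phiw r d I z0) (phiw r d J z0)).
    by exists (phiw r d I z0), (phiw r d J z0); split => //; exists z0.
  move=> e [a [b [Aa Bb ->]]].
  have h1 := H I J hsz aI aJ hdis a b Aa Bb.
  have h2 := edist_ge a b.
  clear -h1 h2; lra.
have [m1 m2 m3] := min_spec (rp r I) (rp r J).
have [n1 n2 _] := min_spec (diam (phiw r d I @` K)) (diam (phiw r d J @` K)).
have hmd : Num.min (diam (phiw r d I @` K)) (diam (phiw r d J @` K)) <=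
    2 * Num.min (rp r I) (rp r J).
  by case: m3 => ->; [apply: (le_trans n1) | apply: (le_trans n2)].
have := ler_wpM2l (ltW hc4) hmd.
move: low; clear; lra.
Qed.
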